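(* There exist absolute constants $c>0$ and $d_0$ such that for all $d\ge d_0$, $\kappa\ge10$, $K\in\mathbb N$, $\eta\ge1$ and every $x_0\in\mathbb{R}^d$ the following holds. Let $f(x)=\frac\kappa2\|x\|_2^2$, $\mathcal H(x,v)=f(x)+\frac12\|v\|_2^2$, $v_0\sim\mathcal N(0,I_d)$, and let $(x_K,v_K)$ be obtained from $(x_0,v_0)$ by $K$ leapfrog steps $v_{k+1/2}=v_k-\frac\eta2\nabla f(x_k)$, $x_{k+1}=x_k+\eta v_{k+1/2}$, $v_{k+1}=v_{k+1/2}-\frac\eta2\nabla f(x_{k+1})$. Then with probability at least $1-d^{-5}$ over $v_0$, $\mathcal H(x_0,v_0)-\mathcal H(x_K,v_K)\le-c\,d$. *)

(* Defs.v *)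
From HB Require Import structures.
From mathcomp Require Import all_boot all_order all_algebra.
From mathcomp Require Import all_classical all_reals all_analysis.
From mathcomp Require Import Rstruct.
Set Implicit Arguments. Unset Strict Implicit. Unset Printing Implicit Defensive.
Import Order.TTheory GRing.Theory Num.Theory.
Local Open Scope classical_set_scope.
Local Open Scope ring_scope.

Notation R := Rdefinitions.R.

Definition fquad (d : nat) (kappa : R) (x : 'I_d -> R) : R :=
  kappa / 2 * \sum_(i < d) x i ^+ 2.

Definition grad_fquad (d : nat) (kappa : R) (x : 'I_d -> R) : 'I_d -> R :=
  fun i => kappa * x i.

Definition hamiltonian (d : nat) (kappa : R) (x v : 'I_d -> R) : R :=
  fquad kappa x + 1 / 2 * \sum_(i < d) v i ^+ 2.

Definition leapfrog_step (d : nat) (gradf : ('I_d -> R) -> ('I_d -> R))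
  (eta : R) (s : ('I_d -> R) * ('I_d -> R)) : ('I_d -> R) * ('I_d -> R) :=
  let x := s.1 in let v := s.2 in
  let vh := fun i => v i - eta / 2 * gradf x i in
  let x' := fun i => x i + eta * vh i in
  let v' := fun i => vh i - eta / 2 * gradf x' i in
  (x', v').

Definition leapfrog (d : nat) (gradf : ('I_d -> R) -> ('I_d -> R))
  (eta : R) (K : nat) (s : ('I_d -> R) * ('I_d -> R)) :=
  iter K (leapfrog_step gradf eta) s.

(* Integral of g against the standard Gaussian measure N(0, I_n) on n.-tuple R,
   defined as the iterated integral against the one-dimensional standard
   normal law (normal_prob 0 1) in each coordinate. *)
Fixpoint gauss_iter (n : nat) : (n.-tuple R -> \bar R) -> \bar R :=
  match n return (n.-tuple R -> \bar R) -> \bar R with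
  | 0 => fun g => g [tuple]
  | n'.+1 => fun g =>
      (\int[normal_prob (0:R) 1]_t gauss_iter (fun v => g (cons_tuple t v)))%E
  end.

Definition gauss_prob (n : nat) (A : set (n.-tuple R)) : \bar R :=
  gauss_iter (fun v => (\1_A v)%:E).

(* Main.v *)
Require Import Defs.
From HB Require Import structures.
From mathcomp Require Import all_boot all_order all_algebra.
From mathcomp Require Import all_classical all_reals all_analysis.
From mathcomp Require Import measurable_realfun.
From mathcomp Require Import ring lra.
Set Implicit Arguments. Unset Strict Implicit. Unset Printing Implicit Defensive.
Import Order.TTheory GRing.Theory Num.Theory.
Local Open Scope classical_set_scope.
Local Open Scope ring_scope.

Section NI.
Context {RT : realType}.
Local Notation mu := (@lebesgue_measure RT).

Lemma integral_normal_prob (m s : RT) (f : RT -> \bar RT) : measurable_fun [set: RT] f ->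
  (\int[normal_prob m s]_x `|f x| < +oo)%E ->
  (\int[normal_prob m s]_x f x =
   \int[mu]_x (f x * (normal_pdf m s x)%:E))%E.
Proof.
move=> mf finf.
rewrite -(Radon_Nikodym_change_of_variables (normal_prob_dominates m s))//=; last first.
  by apply/integrableP; split.
apply: ae_eq_integral => //.
- apply: emeasurable_funM => //; apply: (measurable_int mu).
  apply: (integrableS _ _ (@subsetT _ _)) => //=.
  by apply: Radon_Nikodym_integrable; exact: normal_prob_dominates.
- apply: emeasurable_funM => //=; apply/measurableT_comp => //=.
  exact: measurable_normal_pdf.
- apply: ae_eqe_mul2l => /=.
  rewrite Radon_NikodymE//=; first exact: normal_prob_dominates.
  move=> abmu.
  case: cid => /= h [h1 h2 h3].
  apply: integral_ae_eq => //=.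
  + by apply/measurable_EFinP; exact: measurable_normal_pdf.
  + by move=> E E01 mE; rewrite -h3.
Qed.

Definition gfun (a b : RT) (t : RT) : RT := expR (a + b * t - 4 * t ^+ 2).

Lemma gfun_ge0 a b t : 0 <= gfun a b t. Proof. exact: expR_ge0. Qed.

Lemma measurable_gfun a b : measurable_fun [set: RT] (gfun a b).
Proof.
apply: measurableT_comp => //.
apply: measurable_funB; last by apply: measurable_funM => //; exact: measurable_fun_pow.
by apply: measurable_funD => //; exact: measurable_funM.
Qed.

Lemma gfun_ub a b t : gfun a b t <= expR (a + b ^+ 2 / 16).
Proof.
rewrite /gfun ler_expR.
have : 0 <= (b - 8 * t) ^+ 2 by exact: sqr_ge0.
lra.
Qed.

Lemma pdf_identity a b t :
  gfun a b t * normal_pdf 0 1 t =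
  expR (a + b ^+ 2 / 18) / 3 * normal_pdf (b / 9) (3^-1) t.
Proof.
rewrite /normal_pdf oner_eq0 invr_eq0 (_ : (3:RT) == 0 = false); last first.
  by apply/negbTE; rewrite pnatr_eq0.
rewrite /normal_peak /normal_fun /gfun.
set S := Num.sqrt (1 ^+ 2 * pi *+ 2).
have -> : Num.sqrt (3^-1 ^+ 2 * pi *+ 2) = S / 3.
  have -> : 3^-1 ^+ 2 * pi *+ 2 = 3^-1 ^+ 2 * (1 ^+ 2 * pi *+ 2) :> RT.
    by rewrite expr1n mul1r; symmetry; exact: mulrnAr.
  rewrite sqrtrM ?sqr_ge0// sqrtr_sqr -/S.
  by rewrite ger0_norm ?invr_ge0 ?ler0n// mulrC.
have S0 : S != 0.
  by rewrite /S sqrtr_eq0 -ltNge expr1n mul1r pmulrn_lgt0// pi_gt0.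
set e3 := expR (a + b ^+ 2 / 18).
set e4 := expR (- (t - b / 9) ^+ 2 / (3^-1 ^+ 2 *+ 2)).
rewrite [X in _ = X](_ : _ = S^-1 * (e3 * e4)); last by field; rewrite S0. 
rewrite mulrCA; congr (_ * _).
rewrite /e3 /e4 -!exp.expRD; congr expR.
by rewrite expr1n subr0; field.
Qed.

Lemma gfun_int a b : (\int[normal_prob 0 1]_t (gfun a b t)%:E =
  (expR (a + b ^+ 2 / 18) / 3)%:E)%E.
Proof.
have mg : measurable_fun [set: RT] (fun t => (gfun a b t)%:E).
  by apply/measurable_EFinP; exact: measurable_gfun.
rewrite integral_normal_prob//; last first.
  apply: (@le_lt_trans _ _ (\int[normal_prob 0 1]_t (expR (a + b ^+ 2 / 16))%:E)%E).
    apply: ge0_le_integral => //.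
    - by apply: measurableT_comp => //.
    - by move=> t _; rewrite gee0_abs ?lee_fin ?gfun_ge0 ?gfun_ub.
  by rewrite integral_cst //= probability_setT mule1 ltry.
under eq_integral do rewrite -EFinM pdf_identity EFinM.
rewrite ge0_integralZl//.
- by rewrite integral_normal_pdf mule1.
- by apply/measurable_EFinP; exact: measurable_normal_pdf.
- by move=> t _; rewrite lee_fin normal_pdf_ge0.
Qed.
End NI.

Section LE.
Local Open Scope ereal_scope.
Lemma le_integral_any d (T : measurableType d) (RT : realType)
  (mu : {measure set T -> \bar RT}) (D : set T) (f g : T -> \bar RT) :
  (forall x, f x <= g x) -> \int[mu]_(x in D) f x <= \int[mu]_(x in D) g x.
Proof.
move=> fg.
rewrite /integral.
apply: leeB; apply: ereal_sup_le => _ [h hf <-]; exists h => //= x;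
  apply: (le_trans (hf x)); rewrite ?funeposE ?funenegE /patch /=;
  case: ifP => _ //; rewrite ge_max !le_max ?leeN2 fg lexx !orbT //.
Qed.

End LE.

From mathcomp Require Import Rstruct.

Lemma gauss_iter_le n (F G : n.-tuple R -> \bar R) :
  (forall v, (F v <= G v)%E) -> (gauss_iter F <= gauss_iter G)%E.
Proof.
elim: n F G => [|n IH] F G FG /=; first exact: FG.
by apply: le_integral_any => t; apply: IH => v; exact: FG.
Qed.

Lemma gfun_integrable (a b : R) : (normal_prob (0:R) 1).-integrable [set: R]
    (EFin \o gfun a b).
Proof.
apply/integrableP; split.
  apply/measurable_EFinP; exact: measurable_gfun.
apply: (@le_lt_trans _ _ (\int[normal_prob 0 1]_t (expR (a + b ^+ 2 / 16))%:E)%E).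
  apply: ge0_le_integral => //.
  - apply: measurableT_comp => //; apply/measurable_EFinP; exact: measurable_gfun.
  - by move=> t _ /=; rewrite lee_fin ger0_norm ?gfun_ge0 ?gfun_ub.
by rewrite integral_cst //= probability_setT mule1 ltry.
Qed.

Lemma gauss_iter_prod n (a k : R) (al be : 'I_n -> R) :
  gauss_iter (fun v : n.-tuple R =>
     (a - k * \prod_(i < n) gfun (al i) (be i) (tnth v i))%:E) =
  (a - k * \prod_(i < n) (expR (al i + be i ^+ 2 / 18) / 3))%:E.
Proof.
elim: n k al be => [|n IH] k al be /=; first by rewrite !big_ord0.
have -> : (fun t => gauss_iter (fun v : n.-tuple R =>
     (a - k * \prod_(i < n.+1) gfun (al i) (be i) (tnth (cons_tuple t v) i))%:E))
  = (fun t => (a - k * gfun (al ord0) (be ord0) t * \prod_(i < n) (expR (al (lift ord0 i) + be (lift ord0 i) ^+ 2 / 18) / 3))%:E).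
  apply/funext => t.
  transitivity (gauss_iter (fun v : n.-tuple R => (a - (k * gfun (al ord0) (be ord0) t) *
     \prod_(i < n) gfun (al (lift ord0 i)) (be (lift ord0 i)) (tnth v i))%:E)).
    congr gauss_iter; apply/funext => v; congr (_ - _)%:E.
    rewrite big_ord_recl -mulrA; congr (_ * (_ * _)).
    apply: eq_bigr => i _.
    by have -> : tnth (cons_tuple t v) (lift ord0 i) = tnth v i by exact: tnthS.
  by rewrite IH.
set P := \prod_(i < n) _.
rewrite big_ord_recl /= -/P.
have gi : (normal_prob (0:R) 1).-integrable [set: R]
    (EFin \o (fun t => k * P * gfun (al ord0) (be ord0) t)).
  have := integrableZl measurableT (k * P) (gfun_integrable (al ord0) (be ord0)).
  by apply: eq_integrable => // t _ /=; rewrite EFinM.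
transitivity (\int[normal_prob 0 1]_t ((cst a t)%:E - (k * P * gfun (al ord0) (be ord0) t)%:E))%E.
  by apply: eq_integral => t _; rewrite -EFinB /= mulrAC.
rewrite integralB_EFin //; last exact: finite_measure_integrable_cst.
rewrite [X in (X - _)%E](_ : _ = a%:E); last first.
  by rewrite (eq_integral (cst a%:E)) // integral_cst //= probability_setT mule1.
under eq_integral do rewrite EFinM.
rewrite integralZl //; last first.
  exact: gfun_integrable.
rewrite gfun_int -EFinM -EFinB; congr (_ - _)%:E.
by ring.
Qed.

Fixpoint TU (m : R) (K : nat) : R * R :=
  match K with
  | 0 => (1, 0)
  | K'.+1 => ((TU m K').1 * m + (m ^+ 2 - 1) * (TU m K').2,
              m * (TU m K').2 + (TU m K').1)
  end.

Lemma TU_inv m K : (TU m K).1 ^+ 2 - (m ^+ 2 - 1) * (TU m K).2 ^+ 2 = 1.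
Proof.
elim: K => [|K IH] /=; first by ring.
rewrite -[in RHS]IH; ring.
Qed.

Lemma TU_bound m K : m <= -4 -> (1 <= K)%N ->
  [/\ (TU m K).1 * (TU m K).2 < 0, 1 <= (TU m K).2 ^+ 2 & 16 <= (TU m K).1 ^+ 2].
Proof.
move=> hm; elim: K => [//|K IH] _.
case: K IH => [|K] IH.
  rewrite /=; split; nra.
have [h1 h2 h3] := IH isT.
move: h1 h2 h3; rewrite [TU m K.+2]/=.
set T := (TU m K.+1).1; set u := (TU m K.+1).2 => h1 h2 h3.
have hm2 : 16 <= m ^+ 2 by nra.
split.
- have : (T * m + (m ^+ 2 - 1) * u) * (m * u + T) =
     (2 * m ^+ 2 - 1) * (T * u) + m * (T ^+ 2 + (m ^+ 2 - 1) * u ^+ 2) by ring.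
  move=> ->.
  have : 0 <= T ^+ 2 + (m ^+ 2 - 1) * u ^+ 2.
    apply: addr_ge0; first exact: sqr_ge0.
    by apply: mulr_ge0; [lra|exact: sqr_ge0].
  nra.
- have : (m * u + T) ^+ 2 = m ^+ 2 * u ^+ 2 + 2 * m * (T * u) + T ^+ 2 by ring.
  move=> ->. have : 0 <= T ^+ 2 := sqr_ge0 T. nra.
- have : (T * m + (m ^+ 2 - 1) * u) ^+ 2 =
     m ^+ 2 * T ^+ 2 + 2 * m * (m ^+ 2 - 1) * (T * u) + (m ^+ 2 - 1) ^+ 2 * u ^+ 2 by ring.
  move=> ->. have : 0 <= (m ^+ 2 - 1) ^+ 2 * u ^+ 2.
    by apply: mulr_ge0; exact: sqr_ge0.
  have hmt : 0 <= m * (T * u) by nra.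
  have h5 : 0 <= (m ^+ 2 - 1) * (m * (T * u)) by apply: mulr_ge0; lra.
  have h6 : 0 <= (m ^+ 2 - 16) * T ^+ 2 by apply: mulr_ge0; [lra|exact: sqr_ge0].
  nra.
Qed.

Definition mm (kappa eta : R) : R := 1 - kappa * eta ^+ 2 / 2.
Definition ww (kappa eta : R) : R := 1 - kappa * eta ^+ 2 / 4.

Lemma leapfrog_TU d (kappa eta : R) K (x0 v : 'I_d -> R) :
  leapfrog (grad_fquad kappa) eta K (x0, v) =
  ((fun i => (TU (mm kappa eta) K).1 * x0 i + eta * (TU (mm kappa eta) K).2 * v i),
   (fun i => - (kappa * eta * ww kappa eta * (TU (mm kappa eta) K).2) * x0 i
             + (TU (mm kappa eta) K).1 * v i)).
Proof.
rewrite /leapfrog; elim: K => [|K IH].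
  by rewrite /=; congr (_, _); apply/funext => i /=; ring.
rewrite [iter _ _ _]/= IH /leapfrog_step /grad_fquad /=.
congr (_, _); apply/funext => i /=; rewrite /mm /ww; by field.
Qed.

Lemma ham_diff d (kappa a b c e : R) (x v : 'I_d -> R) :
  hamiltonian kappa x v -
  hamiltonian kappa (fun i => a * x i + b * v i) (fun i => c * x i + e * v i) =
  \sum_(i < d) (- (1/2) * ((kappa * a ^+ 2 + c ^+ 2 - kappa) * x i ^+ 2
     + 2 * (kappa * a * b + c * e) * x i * v i
     + (kappa * b ^+ 2 + e ^+ 2 - 1) * v i ^+ 2)).
Proof.
rewrite /hamiltonian /fquad !mulr_sumr -!big_split -sumrB /=.
by apply: eq_bigr => i _; field.
Qed.

Definition Ac (kappa eta T u : R) :=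
  kappa * T ^+ 2 + (- (kappa * eta * ww kappa eta * u)) ^+ 2 - kappa.
Definition Bc (kappa eta T u : R) :=
  kappa * T * (eta * u) + (- (kappa * eta * ww kappa eta * u)) * T.
Definition Cc (kappa eta T u : R) :=
  kappa * (eta * u) ^+ 2 + T ^+ 2 - 1.

Lemma coef_bounds (kappa eta T u : R) : 10 <= kappa -> 1 <= eta ->
  T ^+ 2 - (mm kappa eta ^+ 2 - 1) * u ^+ 2 = 1 -> 1 <= u ^+ 2 -> 16 <= T ^+ 2 ->
  25 <= Cc kappa eta T u /\
  8 * Bc kappa eta T u ^+ 2 <= 9 * Ac kappa eta T u * Cc kappa eta T u.
Proof.
move=> hk he hinv hu hT.
have hS : T ^+ 2 = 1 + (mm kappa eta ^+ 2 - 1) * u ^+ 2 by lra.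
set h2 := kappa * eta ^+ 2.
have hh : 10 <= h2.
  rewrite /h2; have : 1 <= eta ^+ 2 by nra. nra.
have EC : Cc kappa eta T u = u ^+ 2 * h2 ^+ 2 / 4.
  by rewrite /Cc hS /mm /h2; field.
have EB : Bc kappa eta T u ^+ 2 = (kappa * eta * u * (1 - ww kappa eta)) ^+ 2 * T ^+ 2.
  by rewrite /Bc; ring.
have E : 9 * Ac kappa eta T u * Cc kappa eta T u - 8 * Bc kappa eta T u ^+ 2
    = kappa * u ^+ 2 * h2 ^+ 3 * (T ^+ 2 - 9) / 16.
  by rewrite EB EC /Ac hS /ww /mm /h2; field.
split.
  rewrite EC.
  have : 100 <= h2 ^+ 2 by nra.
  have : h2 ^+ 2 <= u ^+ 2 * h2 ^+ 2.
    by rewrite -[X in X <= _]mul1r ler_wpM2r ?sqr_ge0.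
  lra.
have : 0 <= kappa * u ^+ 2 * h2 ^+ 3 * (T ^+ 2 - 9) / 16.
  apply: divr_ge0; last lra.
  apply: mulr_ge0; last lra.
  apply: mulr_ge0; last by apply: exprn_ge0; lra.
  apply: mulr_ge0; [lra|exact: sqr_ge0].
lra.
Qed.

Lemma pow_bound n : (23 <= n)%N -> (n%:R : R) ^+ 5 <= 2 ^+ n.
Proof.
elim: n => [//|n IH]; rewrite leq_eqVlt => /orP[/eqP <-|hn]; first lra.
have hn' : (23 <= n)%N by [].
have := IH hn'.
have hx : 23 <= (n%:R : R) by rewrite (ler_nat R 23 n).
have h0 : 0 <= (n%:R : R) - 23 by lra.
have h1 : 0 <= (n%:R:R) * ((n%:R:R) - 23) by apply: mulr_ge0; lra.
have h2 : 0 <= (n%:R:R)^+2 * ((n%:R:R) - 23) by apply: mulr_ge0; [exact: sqr_ge0|lra].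
have h3 : 0 <= (n%:R:R)^+3 * ((n%:R:R) - 23) by apply: mulr_ge0; [apply: exprn_ge0; lra|lra].
have h4 : 0 <= (n%:R:R)^+4 * ((n%:R:R) - 23) by apply: mulr_ge0; [apply: exprn_ge0; lra|lra].
rewrite -[n.+1]addn1 natrD exprD expr1 => hI.
have : ((n%:R:R) + 1) ^+ 5 <= 2 * (n%:R:R) ^+ 5 by nra.
lra.
Qed.

Lemma expR14 (T : realType) : expR (4^-1 : T) <= 4 / 3.
Proof.
have h1 := expR_ge1Dx (- 4^-1 : T).
have h2 : expR (4^-1 : T) * expR (- 4^-1) = 1 by rewrite -exp.expRD subrr exp.expR0.
have h3 := expR_ge0 (4^-1 : T).
nra.
Qed.

Theorem lemma15 :
  exists (c : R) (d0 : nat), 0 < c /\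
  forall (d : nat) (kappa : R) (K : nat) (eta : R) (x0 : 'I_d -> R),
    (d0 <= d)%N -> 10 <= kappa -> (1 <= K)%N -> 1 <= eta ->
    (gauss_prob
       [set v0 : d.-tuple R |
          let sK := leapfrog (grad_fquad kappa) eta K (x0, tnth v0) in
          (hamiltonian kappa x0 (tnth v0) - hamiltonian kappa sK.1 sK.2
            <= - (c * d%:R))%R]
     >= (1 - (d%:R) ^- 5)%:E)%E.
Proof.
exists (25/32), 23%N; split; first lra.
move=> d kappa K eta x0 hd hk hK he.
set m := mm kappa eta.
have hm : m <= -4.
  rewrite /m /mm; have : 1 <= eta ^+ 2 by nra.
  have : 10 <= kappa * eta ^+ 2 by nra.
  lra.
have [hTu hu hT] := TU_bound hm hK.
have hinv := TU_inv m K.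
set T := (TU m K).1 in hTu hu hT hinv *.
set u := (TU m K).2 in hTu hu hT hinv *.
have [hC hABC] := coef_bounds hk he hinv hu hT.
set A := Ac kappa eta T u in hABC *.
set B := Bc kappa eta T u in hABC *.
set C := Cc kappa eta T u in hC hABC *.
have C0 : 0 < C by lra.
pose s := 8 / C.
pose al i := - (4 / C) * A * x0 i ^+ 2.
pose be i := - (8 / C) * B * x0 i.
pose k := expR (s * (25/32 * d%:R)).
rewrite /gauss_prob.
set S := [set v0 : d.-tuple R | _].
have key : forall v : d.-tuple R,
   ((1 - k * \prod_(i < d) gfun (al i) (be i) (tnth v i))%:E <= (\1_S v)%:E)%E.
  move=> v.
  set Phi := \sum_(i < d) (- (1/2) * (A * x0 i ^+ 2 + 2 * B * x0 i * tnth v i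
      + C * tnth v i ^+ 2)).
  have hS : S v = (Phi <= - (25 / 32 * d%:R)).
    rewrite /S /= leapfrog_TU ham_diff.
    done.
  have hP : \prod_(i < d) gfun (al i) (be i) (tnth v i) = expR (s * Phi).
    rewrite mulr_sumr expR_sum; apply: eq_bigr => i _; rewrite /gfun; congr expR.
    by rewrite /al /be /s; field; rewrite gt_eqF.
  rewrite hP /k -exp.expRD indicE.
  have s0 : 0 < s by rewrite /s divr_gt0.
  case: (pselect (S v)) => hv.
    rewrite mem_set // lee_fin; have := expR_ge0 (s * (25 / 32 * d%:R) + s * Phi); have -> : (true%:R : R) = 1 by []; lra.
  rewrite memNset // lee_fin.
  move: hv; rewrite hS => /negP; rewrite -ltNge => hv.
  have := expR_ge1Dx (s * (25 / 32 * d%:R) + s * Phi).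
  have : 0 < s * (25 / 32 * d%:R) + s * Phi.
    have h : 0 < 25 / 32 * d%:R + Phi by lra.
    by rewrite -mulrDr; exact: mulr_gt0.
  have -> : (false%:R : R) = 0 by []; lra.
apply: le_trans (gauss_iter_le key).
rewrite gauss_iter_prod lee_fin lerD2l lerN2.
set P := \prod_(i < d) _.
have hmi : forall i : 'I_d, 0 <= expR (al i + be i ^+ 2 / 18) / 3 <= 3^-1.
  move=> i; apply/andP; split; first by rewrite divr_ge0 ?expR_ge0.
  rewrite ler_pdivrMr // mulVf // -[X in _ <= X](exp.expR0 R) ler_expR.
  have -> : al i + be i ^+ 2 / 18 = - (x0 i ^+ 2 * (9 * A * C - 8 * B ^+ 2)) * 4 / (9 * C ^+ 2).
    by rewrite /al /be; field; rewrite gt_eqF.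
  rewrite mulNr mulNr oppr_le0; apply: divr_ge0; last by rewrite mulr_ge0 // sqr_ge0.
  by apply: mulr_ge0 => //; apply: mulr_ge0; [exact: sqr_ge0| lra].
have hP0 : 0 <= P by apply: prodr_ge0 => i _; case/andP: (hmi i).
have hP : P <= 3^-1 ^+ d.
  rewrite (_ : 3^-1 ^+ d = \prod_(i < d) (3^-1 : R)); last by rewrite prodr_const card_ord.
  apply: ler_prod => i _; exact: hmi.
have hkb : k <= (4/3) ^+ d.
  apply: (@le_trans _ _ (expR (4^-1 : R) ^+ d)); last first.
    by apply: lerXn2r; rewrite ?nnegrE ?expR_ge0 ?expR14 //; lra.
  rewrite -expRM_natl ler_expR /s.
  rewrite (_ : 8 / C * (25 / 32 * d%:R) = (25 / C) * (d%:R / 4)); last by field; rewrite gt_eqF.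
  have h1 : 25 / C <= 1 by rewrite ler_pdivrMr // mul1r.
  have h2 : 0 <= d%:R / 4 :> R by rewrite divr_ge0.
  rewrite mulrC; nra.
have hd5 : ((d%:R : R) ^+ 5) <= 2 ^+ d by exact: pow_bound.
have hk0 : 0 <= k by exact: expR_ge0.
apply: (le_trans (ler_pM hk0 hP0 hkb hP)).
rewrite -exprMn.
apply: (@le_trans _ _ ((2^-1) ^+ d)).
  by apply: lerXn2r; rewrite ?nnegrE //; lra.
rewrite exprVn ler_pV2 ?inE ?unitfE ?exprn_gt0 ?expf_neq0 //.
- by rewrite pnatr_eq0 -lt0n; apply: leq_trans hd.
- by rewrite ltr0n; apply: leq_trans hd.
Qed.
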